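(* A nonnegative matrix $M\in\mathbb{R}_+^{p\times q}$ is a slack matrix of a polyhedral cone if and only if $$\{Mz : z\in\mathbb{R}_+^q\}=\{Mz: z\in\mathbb{R}^q\}\cap\mathbb{R}_+^p,$$ i.e., the cone spanned by the columns of $M$ coincides with the set of nonnegative vectors in the column span of $M$.
   Context: A matrix $S\in\mathbb{R}^{p\times q}$ is a slack matrix of a polyhedral cone $K\subseteq\mathbb{R}^n$ if there are matrices $A\in\mathbb{R}^{p\times n}$ and $B\in\mathbb{R}^{n\times q}$ with $K=\{x\in\mathbb{R}^n: x^TB\ge 0\}=\{y^TA: y\in\mathbb{R}_+^p\}$ and $S=AB$. A matrix is a slack matrix of a polyhedral cone if it is a slack matrix of some polyhedral cone. *)

(* Defs.v *)
From mathcomp Require Import all_boot all_order all_algebra.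
Set Implicit Arguments. Unset Strict Implicit. Unset Printing Implicit Defensive.
Import Order.TTheory GRing.Theory Num.Theory.
Local Open Scope ring_scope.

Definition nonneg_mx (R : realFieldType) m n (A : 'M[R]_(m, n)) : Prop :=
  forall i j, 0 <= A i j.

(* S is a slack matrix of a polyhedral cone K in R^n (elements of R^n are
   represented as row vectors 'rV_n, so x^T B is x *m B):
   K = {x | x^T B >= 0} = {y^T A | y >= 0} and S = A B. *)
Definition is_slack_matrix_of_cone (R : realFieldType) (p q n : nat)
    (S : 'M[R]_(p, q)) (K : 'rV[R]_n -> Prop) : Prop :=
  exists (A : 'M[R]_(p, n)) (B : 'M[R]_(n, q)),
    (forall x : 'rV[R]_n, K x <-> nonneg_mx (x *m B)) /\
    (forall x : 'rV[R]_n, K x <-> exists y : 'rV[R]_p, nonneg_mx y /\ x = y *m A) /\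
    S = A *m B.

Definition is_slack_matrix (R : realFieldType) (p q : nat) (S : 'M[R]_(p, q)) : Prop :=
  exists (n : nat) (K : 'rV[R]_n -> Prop), is_slack_matrix_of_cone S K.

(* Main.v *)
Require Import Defs.
From mathcomp Require Import all_boot all_order all_algebra.
From Stdlib Require Import Classical.
From mathcomp Require Import ring.
Import Order.TTheory GRing.Theory Num.Theory.
Local Open Scope ring_scope.

Section Farkas.
Variables (R : realFieldType) (n : nat).

Definition dot (x : 'rV[R]_n) (v : 'cV[R]_n) : R := (x *m v) 0 0.

Fixpoint incone (s : seq 'cV[R]_n) (c : 'cV[R]_n) : Prop :=
  match s with
  | [::] => c = 0
  | a :: s' => exists t, 0 <= t /\ incone s' (c - t *: a)
  end.

Lemma dotDr x u v : dot x (u + v) = dot x u + dot x v.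
Proof. by rewrite /dot mulmxDr mxE. Qed.
Lemma dotZr x t v : dot x (t *: v) = t * dot x v.
Proof. by rewrite /dot -scalemxAr mxE. Qed.
Lemma dotNr x v : dot x (- v) = - dot x v.
Proof. by rewrite /dot mulmxN mxE. Qed.
Lemma dotDl x y v : dot (x + y) v = dot x v + dot y v.
Proof. by rewrite /dot mulmxDl mxE. Qed.
Lemma dotZl x t v : dot (t *: x) v = t * dot x v.
Proof. by rewrite /dot -scalemxAl mxE. Qed.
Lemma dotNl x v : dot (- x) v = - dot x v.
Proof. by rewrite /dot mulNmx mxE. Qed.

Lemma incone_dot {s c x} : incone s c ->
  (forall a, a \in s -> 0 <= dot x a) -> 0 <= dot x c.
Proof.
elim: s c => [|a s IH] c /=; first by move=> -> _; rewrite /dot mulmx0 mxE.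
move=> [t [t0 H]] Hs.
have -> : c = (c - t *: a) + t *: a by rewrite subrK.
rewrite dotDr dotZr addr_ge0 //; first by apply: IH => // b bs; apply: Hs; rewrite inE bs orbT.
by rewrite mulr_ge0 // Hs // inE eqxx.
Qed.

Lemma incone_map {f : 'cV[R]_n -> 'cV[R]_n} {s w} :
  (forall u v, f (u + v) = f u + f v) -> (forall t u, f (t *: u) = t *: f u) ->
  incone (map f s) w -> exists y, incone s y /\ w = f y.
Proof.
move=> fD fZ; elim: s w => [|a s IH] w /=.
  move=> ->; exists 0; split => //.
  by have := fZ 0 0; rewrite !scale0r.
move=> [t [t0 /IH [y [Hy Hw]]]]; exists (y + t *: a); split.
  by exists t; split => //; rewrite addrK.
by rewrite fD fZ -Hw subrK.
Qed.

Lemma dot_self_ge0 (c : 'cV[R]_n) : 0 <= dot c^T c.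
Proof. rewrite /dot mxE; apply: sumr_ge0 => i _; rewrite mxE -expr2; exact: sqr_ge0. Qed.

Lemma dot_self_eq0 (c : 'cV[R]_n) : dot c^T c = 0 -> c = 0.
Proof.
rewrite /dot mxE => H; apply/matrixP => i j; rewrite (ord1 j) mxE.
have Hn : forall k : 'I_n, true -> 0 <= c^T 0 k * c k 0.
  by move=> k _; rewrite mxE -expr2; exact: sqr_ge0.
have := psumr_eq0P Hn H (i:=i) isT.
by rewrite mxE -expr2 => /eqP; rewrite sqrf_eq0 => /eqP.
Qed.

Lemma farkas_seq k : forall s c, size s = k ->
  (forall x, (forall a, a \in s -> 0 <= dot x a) -> 0 <= dot x c) -> incone s c.
Proof.
elim: k => [|k IH] [|a s] c //= Hk H.
  have := H (- c^T) (fun a (h : a \in [::]) => ltac:(by rewrite in_nil in h)).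
  rewrite dotNl oppr_ge0 => Hle; apply: dot_self_eq0.
  by apply/eqP; rewrite eq_le Hle dot_self_ge0.
case: Hk => Hk.
case: (classic (forall x, (forall b, b \in s -> 0 <= dot x b) -> 0 <= dot x c)) => Hc.
  by exists 0; split => //; rewrite scale0r subr0; apply: IH.
have [x0 Hx0] := not_all_ex_not _ _ Hc.
have [Hx0s Hx0c] := imply_to_and _ _ Hx0.
move/negP: Hx0c; rewrite -ltNge => Hx0c.
set al := dot x0 a.
have Hal : al < 0.
  rewrite ltNge; apply/negP => Ha; move: Hx0c; rewrite ltNge => /negP; apply.
  apply: H => b; rewrite inE => /orP [/eqP -> //|]; exact: Hx0s.
pose f v := v - (dot x0 v / al) *: a.
have fD u v : f (u + v) = f u + f v.
  by rewrite /f dotDr mulrDl scalerDl opprD addrACA.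
have fZ t u : f (t *: u) = t *: f u.
  by rewrite /f dotZr scalerBr scalerA mulrA.
have key x v : dot (x - (dot x a / al) *: x0) v = dot x (f v).
  rewrite /f dotDl dotNl dotZl dotDr dotNr dotZr.
  by ring.
have Hf : incone (map f s) (f c).
  apply: IH; first by rewrite size_map.
  move=> x Hx; rewrite -key; apply: H => b; rewrite inE => /orP [/eqP ->|bs].
    rewrite dotDl dotNl dotZl -mulrA mulVf; first by rewrite mulr1 subrr.
    by rewrite lt_eqF.
  rewrite (key x b); apply: Hx; by apply/mapP; exists b.
have [y [Hy Hfy]] := incone_map fD fZ Hf.
have Hy0 : 0 <= dot x0 y by exact: incone_dot Hy Hx0s.
exists (dot x0 c / al - dot x0 y / al); split.
  rewrite -mulrBl mulr_le0 //; last by rewrite invr_le0 ltW.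
  by rewrite subr_le0 (le_trans (ltW Hx0c)).
move: Hfy; rewrite /f => Hfy.
by rewrite scalerBl opprB addrCA Hfy addrCA subrr addr0.
Qed.

End Farkas.
Arguments dot {R n}.
Arguments incone {R n}.

Lemma nonneg_mul (R : realFieldType) m k l (A : 'M[R]_(m, k)) (B : 'M[R]_(k, l)) :
  nonneg_mx A -> nonneg_mx B -> nonneg_mx (A *m B).
Proof. move=> HA HB i j; rewrite mxE; apply: sumr_ge0 => t _; exact: mulr_ge0. Qed.

Lemma farkas_mx (R : realFieldType) n q (B : 'M[R]_(n, q)) (c : 'cV[R]_n) :
  (forall x : 'rV[R]_n, nonneg_mx (x *m B) -> 0 <= (x *m c) 0 0) ->
  exists z : 'cV[R]_q, nonneg_mx z /\ c = B *m z.
Proof.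
move=> H.
have Hc : incone [seq col j B | j <- enum 'I_q] c.
  apply: (@farkas_seq R n _ _ _ erefl) => x Hx.
  apply: H => i j; rewrite (ord1 i).
  have -> : (x *m B) 0 j = dot x (col j B).
    by rewrite /dot colE mulmxA -colE !mxE.
  by apply: Hx; apply: map_f; rewrite mem_enum.
clear H; elim: (enum 'I_q) c Hc => [|j r IH] c /=.
  by move=> ->; exists 0; split; [move=> i k; rewrite mxE | rewrite mulmx0].
move=> [t [t0 /IH [z [zn Hz]]]].
exists (z + t *: delta_mx j 0); split.
  move=> i k; rewrite !mxE addr_ge0 // mulr_ge0 //.
by rewrite mulmxDr -scalemxAr -colE -Hz subrK.
Qed.

Theorem corollary2p3 (R : realFieldType) (p q : nat) (M : 'M[R]_(p, q)) :
  nonneg_mx M ->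
  (is_slack_matrix M <->
   (forall v : 'cV[R]_p,
      (exists z : 'cV[R]_q, nonneg_mx z /\ v = M *m z) <->
      ((exists z : 'cV[R]_q, v = M *m z) /\ nonneg_mx v))).
Proof.
move=> HM; split.
  move=> [n [K [A [B [HK1 [HK2 EM]]]]]] v; split.
    move=> [z [zn ->]]; split; first by exists z.
    exact: nonneg_mul.
  move=> [[z ->] vn].
  have [z' [z'n Hz']] : exists z' : 'cV_q, nonneg_mx z' /\ B *m z = B *m z'.
    apply: farkas_mx => x Hx.
    have [y [yn ->]] := proj1 (HK2 x) (proj2 (HK1 x) Hx).
    rewrite -mulmxA [A *m _]mulmxA -EM; exact: nonneg_mul yn vn 0 0.
  by exists z'; split => //; rewrite EM -!mulmxA Hz'.
move=> H.
exists (\rank M), (fun x => nonneg_mx (x *m row_base M)).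
exists (col_base M), (row_base M); split; first by move=> x.
split; last by rewrite mulmx_base.
move=> x; split; last first.
  by move=> [y [yn ->]]; rewrite -mulmxA mulmx_base; exact: nonneg_mul.
move=> Hx.
have [z [zn Hz]] : exists z : 'cV_p, nonneg_mx z /\ x^T = (col_base M)^T *m z; last first.
  exists z^T; split; first by move=> i j; rewrite mxE.
  by rewrite -[x]trmxK Hz trmx_mul trmxK.
apply: farkas_mx => w Hw.
have EM := mulmx_base M.
move: (col_base M) (row_base M) EM (col_base_full M) (row_base_free M) Hw Hx.
move=> A B EM Afull Bfree Hw Hx.
have [B' HB'] := row_freeP Bfree.
set b := w^T.
have Ab : nonneg_mx (A *m b) by move=> i j; rewrite -[A *m b]trmxK trmx_mul trmxK mxE; exact: Hw.
have Mu : M *m (B' *m b) = A *m b by rewrite -[in RHS](mul1mx b) -HB' !mulmxA EM.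
have [[z' [z'n Hz']] _] : (exists z, nonneg_mx z /\ M *m (B' *m b) = M *m z) /\ True.
  split => //; apply/H; split; first by exists (B' *m b).
  by rewrite Mu.
have Hb : b = B *m z'.
  apply: (row_full_inj Afull); rewrite -Mu Hz'.
  by rewrite mulmxA EM.
have -> : (w *m x^T) 0 0 = (x *m b) 0 0 by rewrite -[w *m x^T]trmxK trmx_mul trmxK mxE.
rewrite Hb mulmxA; exact: nonneg_mul Hx z'n 0 0.
Qed.
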